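(* For each $\gamma\in\Gamma$, $$\sum_{n\ge1}\sum_{\theta\in\Gamma}m^n(\gamma,\theta)\le\sum_{n\ge1}|\gamma|\,\beta(V,\alpha)^n,$$ where $m^n$ is the $n$-th power of the matrix $m(\gamma,\theta)=w(\theta)\mathbf 1\{\gamma\not\sim\theta\}$. In particular, if $\beta(V,\alpha)<1$, then the expected total number of descendants of a finite cycle $\gamma$ in the multitype branching process with mean matrix $m$ is finite.
   Context: Fix $\alpha>0$ and a strictly convex potential $V:\mathbb{Z}^d\to\mathbb{R}^+\cup\{+\infty\}$ with $V(\vec0)=0$. $\Gamma$ is the set of finite cycles of $\mathbb{Z}^d$: a cycle of length $|\gamma|=n\ge2$ on distinct sites $x_1,\dots,x_n$ maps $x_i\mapsto x_{i+1}$ (mod $n$) and fixes other sites, with support $\{\gamma\}=\{x_1,\dots,x_n\}$. $\gamma\not\sim\theta$ means $\{\gamma\}\cap\{\theta\}\neq\emptyset$. $w(\gamma)=\exp\{-\alpha\sum_{x\in\{\gamma\}}V(\gamma(x)-x)\}$ and $\beta(V,\alpha)=\sum_{\theta\in\Gamma,\ \vec0\in\{\theta\}}|\theta|\,w(\theta)$. The $m^n(\gamma,\theta)=\sum_{\gamma_1,\dots,\gamma_{n-1}}m(\gamma,\gamma_1)m(\gamma_1,\gamma_2)\cdots m(\gamma_{n-1},\theta)$ is the mean number of type-$\theta$ individuals in generation $n$ of the multitype branching process started from one individual of type $\gamma$. *)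

(* Defs.v *)
From HB Require Import structures.
From mathcomp Require Import all_boot all_order all_algebra.
From mathcomp Require Import all_classical all_reals all_analysis.
Set Implicit Arguments. Unset Strict Implicit. Unset Printing Implicit Defensive.
Import Order.TTheory GRing.Theory Num.Theory.
Local Open Scope classical_set_scope.
Local Open Scope ring_scope.

Section Cycles.
Variable d : nat.

Definition site := 'rV[int]_d.

Definition is_cycle (g : site -> site) : Prop :=
  exists s : seq site, [/\ (2 <= size s)%N, uniq s,
    (forall i, (i < size s)%N ->
        g (nth 0 s i) = nth 0 s ((i.+1) %% size s)) &
    (forall x, x \notin s -> g x = x)].

Definition Gamma : set (site -> site) := [set g | is_cycle g].

Definition supp (g : site -> site) : set site := [set x | g x <> x].

Definition incompat (g th : site -> site) : Prop := supp g `&` supp th !=set0.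
End Cycles.

Section Weights.
Context {R : realType} {d : nat}.
Local Open Scope ereal_scope.

Definition clen (g : site d -> site d) : \bar R := \esum_(x in supp g) 1.

(* w(g) = exp(- alpha * sum_{x in {g}} V(g x - x)); equals 0 if the sum is +oo. *)
Definition wt (V : site d -> \bar R) (alpha : R) (g : site d -> site d) : \bar R :=
  expeR (- (alpha%:E * \esum_(x in supp g) V (g x - x)%R)).

Definition mm (V : site d -> \bar R) (alpha : R) (g th : site d -> site d) : \bar R :=
  wt V alpha th * (\1_[set th' | incompat g th'] th)%:E.

(* mpowS V alpha n = m^(n+1):
   m^1 = m,  m^(n+2)(g,th) = sum_{eta in Gamma} m^(n+1)(g,eta) m(eta,th). *)
Fixpoint mpowS (V : site d -> \bar R) (alpha : R) (n : nat)
  (g th : site d -> site d) : \bar R :=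
  match n with
  | 0%N => mm V alpha g th
  | n'.+1 => \esum_(eta in @Gamma d) (mpowS V alpha n' g eta * mm V alpha eta th)
  end.

(* m^n for n >= 1 *)
Definition mpow V alpha (n : nat) g th := mpowS V alpha n.-1 g th.

Definition beta (V : site d -> \bar R) (alpha : R) : \bar R :=
  \esum_(th in [set th | @Gamma d th /\ supp th 0%R]) (clen th * wt V alpha th).

(* Strict convexity of V : Z^d -> [0, +oo]: V is the restriction to Z^d of a
   strictly convex function U : R^d -> [0, +oo] (the strict inequality being
   required where the right-hand side is finite). *)
Definition strictly_convex_ext (U : 'rV[R]_d -> \bar R) : Prop :=
  forall (x y : 'rV[R]_d) (t : R), x != y -> (0 < t < 1)%R ->
    U x < +oo -> U y < +oo ->
    U (t *: x + (1 - t) *: y)%R < t%:E * U x + (1 - t)%:E * U y.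

Definition strictly_convex_pot (V : site d -> \bar R) : Prop :=
  exists U : 'rV[R]_d -> \bar R,
    (forall z, 0 <= U z) /\ strictly_convex_ext U /\
    (forall x : site d, V x = U (map_mx (fun k : int => k%:~R) x)).
End Weights.

(* Main.v *)
Set Warnings "-all".
Set Implicit Arguments. Unset Strict Implicit.
Require Import Defs.
From HB Require Import structures.
From mathcomp Require Import all_boot all_order all_algebra.
From mathcomp Require Import all_classical all_reals all_analysis.
From mathcomp Require Import lra.
Import Order.TTheory GRing.Theory Num.Theory.
Local Open Scope classical_set_scope.
Local Open Scope ring_scope.
Section Aux.
Local Open Scope ereal_scope.
Context {R : realType}.

Lemma esum_swap (T1 T2 : choiceType) (I : set T1) (J : set T2)
  (a : T1 -> T2 -> \bar R) : (forall i j, 0 <= a i j) ->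
  \esum_(i in I) \esum_(j in J) a i j = \esum_(j in J) \esum_(i in I) a i j.
Proof.
move=> a0; rewrite (esum_esum (J := fun=> J)) // (esum_esum (J := fun=> I)) //.
rewrite (reindex_esum (J `*` I) _ (fun x => (x.2, x.1)))//; split=> //=.
by move=> [i j] [/=].
by move=> [i1 i2] [j1 j2] /= _ _ [] -> ->.
by move=> [i1 i2] [Pi1 Qi2] /=; exists (i2, i1).
Qed.

Lemma esumZr (T : choiceType) (I : set T) (f : T -> \bar R) (c : \bar R) :
  (forall i, 0 <= f i) -> 0 <= c ->
  \esum_(i in I) (f i * c) = (\esum_(i in I) f i) * c.
Proof.
move=> f0 c0; apply/eqP; rewrite eq_le; apply/andP; split.
  apply: ge_ereal_sup => _ [X [finX XI] <-].
  rewrite -ge0_mule_fsuml //; apply: lee_wpmul2r => //.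
  by apply: ereal_sup_ubound; exists X.
case: c c0 => [r||]; rewrite ?lee_fin => r0; last by [].
- have [->|rp] := eqVneq r 0%R.
    by rewrite mule0 esum1 // => i _; rewrite mule0.
  have rp' : (0 < r)%R by rewrite lt_def rp r0.
  have H : \esum_(i in I) f i <= (\esum_(i in I) (f i * r%:E)) * (r^-1)%:E.
    apply: ge_ereal_sup => _ [X [finX XI] <-].
    have -> : \sum_(i \in X) f i = (\sum_(i \in X) (f i * r%:E)) * (r^-1)%:E.
      rewrite -ge0_mule_fsuml //.
      rewrite -muleA -EFinM mulfV // mule1 //.
    apply: lee_wpmul2r; first by rewrite lee_fin invr_ge0.
    by apply: ereal_sup_ubound; exists X.
  rewrite (le_trans (lee_wpmul2r _ H)) ?lee_fin //.
  by rewrite -muleA -EFinM mulVf // mule1.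
- have [->|] := eqVneq (\esum_(i in I) f i) 0; first by rewrite mul0e; apply: esum_ge0 => i _; rewrite mule_ge0.
  move=> Hne.
  have [i Ii fi] : exists2 i, I i & 0 < f i.
    apply: contrapT => H; apply/negP: Hne; rewrite negbK; apply/eqP.
    apply: esum1 => i Ii; apply/eqP; rewrite eq_le f0 andbT.
    by rewrite leNgt; apply/negP => fi; apply: H; exists i.
  suff -> : \esum_(i in I) (f i * +oo) = +oo by rewrite leey.
  apply/eq_infty => y.
  apply: esum_ge; exists [set i]; first by split; [exact: finite_set1| move=> j ->].
  by rewrite fsbig_set1 gt0_muley // leey.
Qed.

Lemma esumZl (T : choiceType) (I : set T) (f : T -> \bar R) (c : \bar R) :
  (forall i, 0 <= f i) -> 0 <= c ->
  \esum_(i in I) (c * f i) = c * (\esum_(i in I) f i).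
Proof.
move=> f0 c0; rewrite muleC -esumZr //; apply: eq_esum => i _; exact: muleC.
Qed.
End Aux.
Section Cyc.
Variable d : nat.
Implicit Types (g : site d -> site d).

Lemma supp_cycle g (s : seq (site d)) : (2 <= size s)%N -> uniq s ->
  (forall i, (i < size s)%N -> g (nth 0 s i) = nth 0 s ((i.+1) %% size s)) ->
  (forall x, x \notin s -> g x = x) ->
  supp g = [set x | x \in s].
Proof.
move=> s2 us gs gn; apply/seteqP; split => x /=.
  by rewrite /supp /=; apply: contra_notT => /gn.
move=> xs; rewrite /supp /=.
have ilt : (index x s < size s)%N by rewrite index_mem.
rewrite -(nth_index 0 xs) gs //.
move/eqP; rewrite nth_uniq // ?ltn_pmod //; last by case: (size s) s2.
apply/negP; set i := index x s in ilt *.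
case: (ltngtP i.+1 (size s)) => h.
- by rewrite modn_small // (gtn_eqF (ltnSn i)).
- by move: h; rewrite ltnS leqNgt ilt.
- rewrite h modnn; apply/eqP => i0; move: h; rewrite -i0 => h.
  by rewrite -h in s2.
Qed.

Definition shift (c : site d) g : site d -> site d := fun y => g (y + c) - c.

Lemma shiftK c g : shift (- c) (shift c g) = g.
Proof. by apply: funext => y; rewrite /shift opprK !subrK. Qed.

Lemma supp_shift c g y : supp (shift c g) y <-> supp g (y + c).
Proof.
rewrite /supp /shift /=; split => H E; apply: H.
  by rewrite E addrK.
by move/(congr1 (fun z => z + c)): E; rewrite subrK.
Qed.

Lemma Gamma_shift c g : Gamma g -> Gamma (shift c g).
Proof.
move=> [s [s2 us gs gn]]; exists (map (fun z => z - c) s).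
have inj : injective (fun z : site d => z - c) by move=> a b /addIr.
rewrite size_map; split => //.
- by rewrite map_inj_uniq.
- move=> i ilt; rewrite !(nth_map 0) //; last first.
    by rewrite ltn_pmod //; case: (size s) s2.
  by rewrite /shift subrK gs.
- move=> x xn; rewrite /shift gn ?addrK //.
  apply: contra xn => xs; apply/mapP; exists (x + c) => //.
  by rewrite addrK.
Qed.

Lemma supp_shift_bij c g :
  set_bij (supp g) (supp (shift c g)) (fun x => x - c).
Proof.
split.
- by move=> x gx; apply/supp_shift; rewrite subrK.
- by move=> a b _ _ /addIr.
- by move=> y /supp_shift gy; exists (y + c) => //; rewrite addrK.
Qed.
End Cyc.

Section Weights2.
Context {R : realType} {d : nat}.
Local Open Scope ereal_scope.
Variables (V : site d -> \bar R) (alpha : R).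

Lemma clen_shift (c : site d) (g : site d -> site d) : clen (shift c g) = clen g :> \bar R.
Proof. by rewrite /clen (reindex_esum _ _ _ _ (supp_shift_bij c g)). Qed.

Lemma wt_shift (c : site d) (g : site d -> site d) : wt V alpha (shift c g) = wt V alpha g.
Proof.
rewrite /wt (reindex_esum _ _ _ _ (supp_shift_bij c g)); congr expeR; congr (- (_ * _)).
apply: eq_esum => x _; congr V; rewrite /shift subrK.
by rewrite opprB addrA subrK.
Qed.

Lemma wt_ge0 (th : site d -> site d) : 0 <= wt V alpha th.
Proof. exact: expeR_ge0. Qed.

Lemma clen_ge0 (th : site d -> site d) : 0 <= clen th :> \bar R.
Proof. by apply: esum_ge0 => x _. Qed.

Definition F (th : site d -> site d) := clen th * wt V alpha th.
Lemma F_ge0 (th : site d -> site d) : 0 <= F th.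
Proof. by rewrite mule_ge0 ?wt_ge0 ?clen_ge0. Qed.

Definition ind (x : site d) (th : site d -> site d) : \bar R :=
  if th \in [set th' | supp th' x] then 1 else 0.
Lemma ind_ge0 x th : 0 <= ind x th.
Proof. by rewrite /ind; case: ifP. Qed.

Lemma beta_ge0 : 0 <= beta V alpha.
Proof. by apply: esum_ge0 => th _; apply: F_ge0. Qed.

Lemma mm_ge0 (g th : site d -> site d) : 0 <= mm V alpha g th.
Proof. by rewrite /mm mule_ge0 ?wt_ge0 // lee_fin indic_ge0. Qed.

Lemma mpowS_ge0 n (g th : site d -> site d) : 0 <= mpowS V alpha n g th.
Proof.
elim: n th => [|n IH] th /=; first exact: mm_ge0.
by apply: esum_ge0 => e _; rewrite mule_ge0 ?mm_ge0.
Qed.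

Lemma transl x : \esum_(th in @Gamma d) (ind x th * F th) = beta V alpha.
Proof.
rewrite /beta.
transitivity (\esum_(th in @Gamma d `&` [set th' | supp th' x]) F th).
  rewrite esum_mkcondr; apply: eq_esum => th _; rewrite /ind.
  by case: ifP; rewrite ?mul1e ?mul0e.
rewrite [RHS](reindex_esum (@Gamma d `&` [set th' | supp th' x]) _ (shift x)).
  by apply: eq_esum => th _; rewrite /F clen_shift wt_shift.
split.
- move=> th [Gt st]; split; first exact: Gamma_shift.
  by apply/supp_shift; rewrite add0r.
- by move=> a b _ _ E; rewrite -(shiftK x a) E shiftK.
- move=> th' [Gt st]; exists (shift (- x)%R th'); last by rewrite -{1}(opprK x) shiftK.
  split; first exact: Gamma_shift.
  by apply/supp_shift; rewrite subrr.
Qed.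

Lemma step3 eta : @Gamma d eta ->
  \esum_(th in @Gamma d) (mm V alpha eta th * clen th) <= clen eta * beta V alpha.
Proof.
move=> Ge.
have ind_le th : (\1_[set th' | incompat eta th'] th)%:E <=
    \esum_(x in supp eta) ind x th.
  rewrite indicE; case: (boolP (th \in _)) => [|_]; last first.
    by apply: esum_ge0 => x _; apply: ind_ge0.
  rewrite inE => -[x [ex tx]]; apply: esum_ge; exists [set x].
    by split; [exact: finite_set1|move=> y ->].
  by rewrite fsbig_set1 /ind ifT // inE.
apply: (@le_trans _ _ (\esum_(th in @Gamma d)
   (wt V alpha th * (\esum_(x in supp eta) ind x th) * clen th))).
  apply: le_esum => th _; rewrite /mm; apply: lee_wpmul2r; first exact: clen_ge0.
  by apply: lee_wpmul2l; [exact: wt_ge0|exact: ind_le].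
rewrite (eq_esum (b := fun th => \esum_(x in supp eta) (ind x th * F th))); last first.
  move=> th _; rewrite esumZr ?F_ge0 //; last by move=> x; exact: ind_ge0.
  by rewrite /F [wt _ _ _ * _]muleC -muleA [_ * clen _]muleC.
rewrite esum_swap; last by move=> th x; rewrite mule_ge0 ?ind_ge0 ?F_ge0.
rewrite (eq_esum (b := fun x => 1 * beta V alpha)); last first.
  by move=> x _; rewrite transl mul1e.
by rewrite esumZr ?beta_ge0.
Qed.

Definition Tn n (g : site d -> site d) := \esum_(th in @Gamma d) (mpowS V alpha n g th * clen th).

Lemma T_le n g : @Gamma d g -> Tn n g <= clen g * beta V alpha ^+ n.+1.
Proof.
move=> Gg; elim: n => [|n IH].
  by rewrite /Tn expeS expe0 mule1 /=; apply: step3.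
rewrite /Tn (eq_esum (b := fun th => (\esum_(e in @Gamma d)
  (mpowS V alpha n g e * mm V alpha e th)) * clen th)); last by [].
rewrite (eq_esum (b := fun th => \esum_(e in @Gamma d)
   (mpowS V alpha n g e * (mm V alpha e th * clen th)))); last first.
  move=> th _ /=; rewrite -esumZr; last exact: clen_ge0.
    by apply: eq_esum => e _; rewrite -muleA.
  by move=> e; rewrite mule_ge0 ?mpowS_ge0 ?mm_ge0.
rewrite esum_swap; last first.
  by move=> th e; apply: mule_ge0; [exact: mpowS_ge0|apply: mule_ge0; [exact: mm_ge0|exact: clen_ge0]].
rewrite (eq_esum (b := fun e => mpowS V alpha n g e *
   \esum_(th in @Gamma d) (mm V alpha e th * clen th))); last first.
  move=> e _; rewrite esumZl ?mpowS_ge0 //.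
  by move=> th; rewrite mule_ge0 ?mm_ge0 ?clen_ge0.
apply: (@le_trans _ _ (\esum_(e in @Gamma d)
   (mpowS V alpha n g e * clen e * beta V alpha))).
  apply: le_esum => e Ge; rewrite -muleA; apply: lee_wpmul2l.
    exact: mpowS_ge0.
  exact: step3.
rewrite esumZr ?beta_ge0 //; last first.
  by move=> e; rewrite mule_ge0 ?mpowS_ge0 ?clen_ge0.
rewrite expeS [beta V alpha * _]muleC muleA.
by apply: lee_wpmul2r; [exact: beta_ge0|exact: IH].
Qed.
End Weights2.

Section Series.
Context {R : realType}.
Local Open Scope ereal_scope.

Lemma ser_le (u v : nat -> \bar R) : (forall n, 0 <= u n) -> (forall n, 0 <= v n) ->
  (forall n, (1 <= n)%N -> u n <= v n) ->
  \sum_(1 <= n <oo) u n <= \sum_(1 <= n <oo) v n.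
Proof.
move=> u0 v0 uv; apply: lee_lim.
- by apply: is_cvg_ereal_nneg_natsum => n _.
- by apply: is_cvg_ereal_nneg_natsum => n _.
- near=> k; rewrite big_nat_cond [X in _ <= X]big_nat_cond.
  by apply: lee_sum => i /andP[/andP[i1 _] _]; exact: uv.
Unshelve. all: by end_near.
Qed.

Lemma geo_real (c b : R) (k : nat) : (0 <= c)%R -> (0 <= b)%R -> (b < 1)%R ->
  (\sum_(1 <= i < k) c * b ^+ i <= c / (1 - b))%R.
Proof.
move=> c0 b0 b1.
have h1 : (0 <= c / (1 - b))%R by rewrite divr_ge0 // subr_ge0 ltW.
case: k => [|k]; first by rewrite big_geq.
apply: (@le_trans _ _ (\sum_(0 <= i < k.+1) c * b ^+ i)%R).
  by rewrite (big_ltn (isT : (0 < k.+1)%N)) expr0 mulr1 lerDr.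
have -> : (\sum_(0 <= i < k.+1) c * b ^+ i)%R = series (geometric c b) k.+1 by [].
rewrite geometric_seriesE ?lt_eqF //=.
apply: ler_wpM2r; first by rewrite invr_ge0 subr_ge0 ltW.
rewrite mulrBr mulr1 gerBl; apply: mulr_ge0 => //; exact: exprn_ge0.
Qed.

Lemma geo_fin (c b : R) : (0 <= c)%R -> (0 <= b)%R -> (b < 1)%R ->
  \sum_(1 <= n <oo) (c%:E * b%:E ^+ n) < +oo.
Proof.
move=> c0 b0 b1.
apply: (@le_lt_trans _ _ (c / (1 - b))%:E); last exact: ltry.
apply: lime_le.
  apply: is_cvg_ereal_nneg_natsum => n _.
  by rewrite -EFin_expe -EFinM lee_fin mulr_ge0 // exprn_ge0.
near=> k.
under eq_bigr => i _ do rewrite -EFin_expe -EFinM.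
by rewrite sumEFin lee_fin geo_real.
Unshelve. all: by end_near.
Qed.
End Series.

Section Final.
Context {R : realType} {d : nat}.
Local Open Scope ereal_scope.

Lemma clen_ge1 (th : site d -> site d) : @Gamma d th -> 1 <= clen th :> \bar R.
Proof.
move=> [s [s2 us gs gn]]; rewrite /clen (supp_cycle s2 us gs gn).
have s0 : nth 0%R s 0 \in s by rewrite mem_nth // (leq_trans _ s2).
apply: esum_ge; exists [set nth 0%R s 0].
  by split; [exact: finite_set1| move=> y ->].
by rewrite fsbig_set1.
Qed.

Lemma clen_fin (th : site d -> site d) : @Gamma d th -> (clen th : \bar R) \is a fin_num.
Proof.
move=> [s [s2 us gs gn]]; rewrite /clen (supp_cycle s2 us gs gn).
rewrite esum_fset //; last exact: finite_seq.
rewrite fsbig_finite ?finite_seq //=.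
by apply/sum_fin_numP.
Qed.
End Final.

Unset Implicit Arguments.
Set Strict Implicit.
Theorem lemma3p6 (R : realType) (d : nat) (alpha : R) (V : site d -> \bar R)
  (halpha : 0 < alpha) (hV0 : V 0 = 0%E) (hVnn : forall x, (0 <= V x)%E)
  (hVconv : strictly_convex_pot V)
  (g : site d -> site d) (hg : @Gamma d g) :
  ((\sum_(1 <= n <oo) \esum_(th in @Gamma d) mpow V alpha n g th)
     <= \sum_(1 <= n <oo) (clen g * beta V alpha ^+ n))%E
  /\ ((beta V alpha < 1)%E ->
      (\sum_(1 <= n <oo) \esum_(th in @Gamma d) mpow V alpha n g th < +oo)%E).
Proof.
have key n : (1 <= n)%N -> (\esum_(th in @Gamma d) mpow V alpha n g th <=
    clen g * beta V alpha ^+ n)%E.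
  case: n => // n _; rewrite /mpow /=.
  apply: le_trans (T_le V alpha n hg).
  apply: le_esum => th Gt; apply: lee_pemulr; [exact: mpowS_ge0 | exact: clen_ge1].
have part1 : ((\sum_(1 <= n <oo) \esum_(th in @Gamma d) mpow V alpha n g th)
     <= \sum_(1 <= n <oo) (clen g * beta V alpha ^+ n))%E.
  apply: ser_le => //.
  - by move=> n; apply: esum_ge0 => th _; exact: mpowS_ge0.
  - by move=> n; rewrite mule_ge0 ?clen_ge0 // expe_ge0 // beta_ge0.
split => // hb; apply: (le_lt_trans part1).
have bf : beta V alpha \is a fin_num.
  by rewrite ge0_fin_numE ?beta_ge0 // (lt_trans hb) // ltry.
have cf : (clen g : \bar R) \is a fin_num := clen_fin hg.
rewrite -(fineK bf) -(fineK cf); apply: geo_fin.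
- by rewrite fine_ge0 // clen_ge0.
- by rewrite fine_ge0 // beta_ge0.
- by rewrite -lte_fin fineK.
Qed.
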